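(* For all integers $n\ge 1$ and $k\ge 2$, $$d_k(n+1)=d_{k-2}(n)+3\,d_{k-1}(n)+d_k(n)+2\,s_k(n).$$
   Context: For $n\ge 1$, the $2\times n$ board consists of $2n$ unit squares $x_0,\dots,x_{2n-1}$ arranged in 2 rows and $n$ columns, labeled with the top row first (left to right, $x_0,\dots,x_{n-1}$... ) — more precisely, labeled so that $x_{2i}$ and $x_{2i+1}$ form column $i$ ($i=0,\dots,n-1$), with $x_{2n-2},x_{2n-1}$ the two squares of the rightmost column. Two squares are adjacent iff they share an edge. A piece is a nonempty set of squares that is connected under adjacency. A division of the board into $k$ pieces is a partition of the set of all $2n$ squares into exactly $k$ pieces. $d_k(n)$ denotes the number of divisions of the $2\times n$ board into $k$ pieces (so $d_0(n)=0$, $d_1(n)=1$). $s_k(n)$ denotes the number of such divisions in which the two squares of the rightmost column lie in different pieces. *)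

(* Defs.v *)
From mathcomp Require Import all_boot.
Unset Implicit Arguments. Unset Printing Implicit Defensive.

(* Squares of the 2 x n board: 'I_(2*n).  Square j lies in column j %/ 2
   and row j %% 2, so x_(2i), x_(2i+1) form column i. *)
Definition square (n : nat) := 'I_(2 * n).

Definition adj (n : nat) (x y : square n) : bool :=
  ((x %/ 2 == y %/ 2) && (x %% 2 != y %% 2))
  || ((x %% 2 == y %% 2) && ((x %/ 2 == (y %/ 2).+1) || (y %/ 2 == (x %/ 2).+1))).

Definition piece (n : nat) (A : {set square n}) : bool :=
  (A != set0) &&
  [forall x in A, forall y in A,
     connect [rel u v | [&& u \in A, v \in A & adj n u v]] x y].

Definition division (n k : nat) (P : {set {set square n}}) : bool :=
  [&& partition P [set: square n], [forall A in P, piece n A] & #|P| == k].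

Definition d (k n : nat) : nat := #|[set P | division n k P]|.

Definition rightmost_split (n : nat) (P : {set {set square n}}) : bool :=
  [forall A in P, forall x : square n, forall y : square n,
     ((val x == (2 * n - 2)%N) && (val y == (2 * n - 1)%N)) ==>
       ~~ ((x \in A) && (y \in A))].

Definition s (k n : nat) : nat :=
  #|[set P | division n k P && rightmost_split n P]|.

(* Main.v *)
Require Import Defs.
From mathcomp Require Import all_boot.
From mathcomp Require Import zify.
Set Implicit Arguments. Unset Strict Implicit.

Section Generic.
Variable X : finType.

Definition rest (e : rel X) (A : {set X}) : rel X :=
  [rel a b | [&& a \in A, b \in A & e a b]].
Definition conn (e : rel X) (A : {set X}) :=
  [forall x in A, forall y in A, connect (rest e A) x y].

Lemma connect_inv (e : rel X) (G : pred X) x y :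
  G x -> (forall a b, G a -> e a b -> G b) -> connect e x y -> G y.
Proof.
move=> Gx step /connectP[s pth ->]; elim: s x Gx pth => [|z s IH] x Gx //=.
by case/andP=> exz pth; apply: IH pth; apply: step exz.
Qed.

Lemma conn_root (e : rel X) (A : {set X}) r : symmetric e -> r \in A ->
  (forall z, z \in A -> connect (rest e A) z r) -> conn e A.
Proof.
move=> sym rA H; apply/forall_inP=> x xA; apply/forall_inP=> y yA.
apply: connect_trans (H x xA) _.
have symR : connect_sym (rest e A).
  by apply: sym_connect_sym => a b; rewrite /rest /= sym andbCA.
by rewrite symR; apply: H.
Qed.

Lemma closureS (e : rel X) (B S : {set X}) z : conn e B -> z \in B -> z \in S ->
  (forall a b, a \in S -> a \in B -> b \in B -> e a b -> b \in S) -> B \subset S.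
Proof.
move=> /forall_inP cB zB zS H; apply/subsetP=> y yB.
have /forall_inP/(_ y yB) := cB z zB.
apply: (connect_inv (G := [in S])) => // a b aS /and3P[aB bB eab].
exact: H aS aB bB eab.
Qed.

Lemma preim_card (Y : finType) (f : X -> Y) :
  #|preim_partition f [set: X]| = #|f @: [set: X]|.
Proof.
rewrite /preim_partition /equivalence_partition.
pose g c := [set y in [set: X] | c == f y].
have -> : [set [set y in [set: X] | f x == f y] | x in [set: X]] = g @: (f @: [set: X]).
  by rewrite -imset_comp.
apply: card_in_imset => _ _ /imsetP[x1 _ ->] /imsetP[x2 _ ->] E.
have : x1 \in g (f x1) by rewrite /g !inE /= eqxx.
by rewrite E /g !inE /= => /eqP ->.
Qed.

Lemma preim_pblock (Y : eqType) (f : X -> Y) x y :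
  (y \in pblock (preim_partition f [set: X]) x) = (f x == f y).
Proof.
have := @pblock_equivalence_partition X (fun x y => f x == f y) [set: X].
move=> -> // a b c _ _ _; split; first exact: eqxx. by move=> /eqP ->.
Qed.

Lemma preim_eq (Y Y' : eqType) (f : X -> Y) (g : X -> Y') :
  (forall x y, (f x == f y) = (g x == g y)) ->
  preim_partition f [set: X] = preim_partition g [set: X].
Proof.
move=> H; rewrite /preim_partition /equivalence_partition.
by apply: eq_imset => x; apply/setP=> y; rewrite !inE H.
Qed.

Lemma part_cover (P : {set {set X}}) x : partition P [set: X] -> x \in cover P.
Proof. by case/and3P=> /eqP -> _ _; rewrite inE. Qed.

Lemma part_pblock_img (P : {set {set X}}) : partition P [set: X] ->
  [set pblock P x | x in [set: X]] = P.
Proof.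
move=> pP; apply/setP=> B; apply/imsetP/idP=> [[x _ ->]|BP].
  by apply: pblock_mem; apply: part_cover.
have /set0Pn[x xB] := partition_neq0 pP BP.
by exists x => //; rewrite (def_pblock (partition_trivIset pP) BP xB).
Qed.

End Generic.

Lemma connect_img (X Y : finType) (e : rel X) (e' : rel Y) (f : X -> Y)
  (A : {set X}) (B : {set Y}) x y :
  (forall a b, e a b -> e' (f a) (f b)) -> (forall a, a \in A -> f a \in B) ->
  connect (rest e A) x y -> connect (rest e' B) (f x) (f y).
Proof.
move=> He HAB; apply: (connect_inv (G := fun z => connect (rest e' B) (f x) (f z))).
  exact: connect0.
move=> a b Ha /and3P[aA bA eab]; apply: connect_trans Ha (connect1 _).
by rewrite /rest /= !HAB // He.
Qed.

Lemma pieceE m (A : {set square m}) : piece m A = (A != set0) && conn (adj m) A.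
Proof. by []. Qed.

Lemma card_bij (X Y : finType) (A : {set X}) (B : {set Y}) (f : X -> Y) (g : Y -> X) :
  (forall x, x \in A -> f x \in B /\ g (f x) = x) ->
  (forall y, y \in B -> g y \in A /\ f (g y) = y) -> #|A| = #|B|.
Proof.
move=> HA HB; have EB : f @: A = B.
  apply/setP=> y; apply/imsetP/idP => [[x xA ->]|yB].
    by case: (HA x xA).
  by case: (HB y yB) => gA fg; exists (g y).
rewrite -EB card_in_imset // => x1 x2 x1A x2A E.
by case: (HA x1 x1A) => _ <-; case: (HA x2 x2A) => _ <-; rewrite E.
Qed.

Lemma card_split3 (X : finType) (A : {set X}) (f : X -> bool * bool * bool) :
  #|A| = \sum_(a : bool) \sum_(b : bool) \sum_(c : bool) #|[set x in A | f x == (a, b, c)]|.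
Proof.
rewrite pair_bigA pair_bigA /=.
rewrite -sum1_card (partition_big f xpredT) //=.
apply: eq_bigr => [[[a b] c]] _ /=.
by rewrite -sum1_card; apply: eq_bigl => x; rewrite !inE.
Qed.


Lemma adjE m (x y : square m) : adj m x y =
  [|| ((x : nat).+1 == y) && (x %% 2 == 0), ((y : nat).+1 == x) && (y %% 2 == 0),
      (x : nat).+2 == y | (y : nat).+2 == x].
Proof.
rewrite /adj; apply/idP/idP.
- case/orP=> /andP[/eqP H1 H2]; lia.
- lia.
Qed.

Lemma adj_sym m : symmetric (adj m).
Proof. by move=> x y; rewrite !adjE; apply/idP/idP; lia. Qed.

Section Board.
Variable n : nat.
Hypothesis n_gt0 : 0 < n.

Local Notation T := (square n).
Local Notation T' := (square n.+1).

Lemma le_w : 2 * n <= 2 * n.+1. Proof. lia. Qed.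
Lemma lt_u : 2 * n < 2 * n.+1. Proof. lia. Qed.
Lemma lt_v : (2 * n).+1 < 2 * n.+1. Proof. lia. Qed.
Lemma lt_p : 2 * n - 2 < 2 * n. Proof. lia. Qed.
Lemma lt_q : 2 * n - 1 < 2 * n. Proof. lia. Qed.

Definition w (x : T) : T' := widen_ord le_w x.
Definition u : T' := Ordinal lt_u.
Definition v : T' := Ordinal lt_v.
Definition p : T := Ordinal lt_p.
Definition q : T := Ordinal lt_q.
Definition lo (z : T') : T := insubd p (val z).

Lemma lo_w x : lo (w x) = x.
Proof. by apply: val_inj; rewrite /lo insubdK //=; apply: ltn_ord. Qed.

Lemma w_inj : injective w.
Proof. by move=> x y /(congr1 val) /= /val_inj. Qed.

Lemma wu x : (w x == u) = false.
Proof. by apply/eqP=> /(congr1 val) /=; have := ltn_ord x; lia. Qed.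
Lemma wv x : (w x == v) = false.
Proof. by apply/eqP=> /(congr1 val) /=; have := ltn_ord x; lia. Qed.
Lemma uv : (u == v) = false.
Proof. by apply/eqP=> /(congr1 val) /=; lia. Qed.
Lemma vu : (v == u) = false.
Proof. by rewrite eq_sym uv. Qed.

Lemma caseT (z : T') : [\/ z = u, z = v | exists x, z = w x].
Proof.
case: (ltnP (z : nat) (2 * n)) => H.
  by apply: Or33; exists (Ordinal H); apply: val_inj.
have := ltn_ord z => H2.
case: ((z : nat) =P 2 * n) => E.
  by apply: Or31; apply: val_inj; rewrite /= E.
by apply: Or32; apply: val_inj => /=; lia.
Qed.

Lemma adj_ww x y : adj n.+1 (w x) (w y) = adj n x y.
Proof. by []. Qed.
Lemma adj_wu x : adj n.+1 (w x) u = (x == p).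
Proof.
rewrite adjE -(inj_eq val_inj) /=; apply/idP/idP; have := ltn_ord x; lia.
Qed.
Lemma adj_wv x : adj n.+1 (w x) v = (x == q).
Proof.
rewrite adjE -(inj_eq val_inj) /=; apply/idP/idP; have := ltn_ord x; lia.
Qed.
Lemma adj_uv : adj n.+1 u v. Proof. rewrite adjE /=; lia. Qed.
Lemma adj_uu : adj n.+1 u u = false. Proof. rewrite adjE /=; apply/idP; lia. Qed.
Lemma adj_vv : adj n.+1 v v = false. Proof. rewrite adjE /=; apply/idP; lia. Qed.
Lemma adj_pq : adj n p q. Proof. rewrite adjE /=; lia. Qed.
Lemma pq : (p == q) = false.
Proof. by apply/eqP=> /(congr1 val) /=; lia. Qed.


Definition lower (B : {set T'}) : {set T} := [set y | w y \in B].

Definition lab (Q : {set {set T}}) (a b c : bool) (z : T') : {set T} * option bool :=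
  if z == u then (if a then (pblock Q p, None) else if c && b then (pblock Q q, None) else (set0, Some true))
  else if z == v then (if b then (pblock Q q, None) else if c && a then (pblock Q p, None)
                       else if c then (set0, Some true) else (set0, Some false))
  else (pblock Q (lo z), None).

Definition ext Q a b c := preim_partition (lab Q a b c) [set: T'].

Definition res (P : {set {set T'}}) : {set {set T}} :=
  preim_partition (fun x => lower (pblock P (w x))) [set: T].

Definition abcP (P : {set {set T'}}) : bool * bool * bool :=
  (w p \in pblock P u, (w q \in pblock P v) && ~~ ((w p \in pblock P u) && (v \in pblock P u)),
   v \in pblock P u).

Definition valid (Q : {set {set T}}) (a b c : bool) :=
  ~~ [&& a, b & c] && ((q \in pblock Q p) ==> ~~ ([&& a, b & ~~ c] || [&& ~~ a, b & c])).

Definition delta (a b c : bool) : nat :=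
  match a, b, c with
  | false, false, false => 2
  | true, false, false | false, true, false | false, false, true => 1
  | _, _, _ => 0
  end.

Section ExtProps.
Variable Q : {set {set T}}.
Hypothesis pQ : partition Q [set: T].
Variables a b c : bool.
Local Notation lab := (lab Q a b c).
Local Notation ext := (ext Q a b c).

Lemma memQ x : x \in pblock Q x.
Proof. by rewrite mem_pblock; apply: part_cover. Qed.
Lemma pbQ x : pblock Q x \in Q.
Proof. by apply: pblock_mem; apply: part_cover. Qed.
Lemma eqQ x y : (pblock Q x == pblock Q y) = (y \in pblock Q x).
Proof. by rewrite eq_pblock ?(partition_trivIset pQ) ?part_cover. Qed.
Lemma sameQ x y : y \in pblock Q x -> pblock Q y = pblock Q x.
Proof. by apply: same_pblock; apply: partition_trivIset pQ. Qed.

Lemma lab_w x : lab (w x) = (pblock Q x, None).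
Proof. by rewrite /Board.lab wu wv lo_w. Qed.
Lemma lab_u : lab u = (if a then (pblock Q p, None) else if c && b then (pblock Q q, None) else (set0, Some true)).
Proof. by rewrite /Board.lab eqxx. Qed.
Lemma lab_v : lab v = (if b then (pblock Q q, None) else if c && a then (pblock Q p, None)
                       else if c then (set0, Some true) else (set0, Some false)).
Proof. by rewrite /Board.lab vu eqxx. Qed.

Lemma mem_ext z y : (y \in pblock ext z) = (lab z == lab y).
Proof. exact: preim_pblock. Qed.

Lemma ext_part : partition ext [set: T'].
Proof. exact: preim_partitionP. Qed.

Lemma lower_ext x : lower (pblock ext (w x)) = pblock Q x.
Proof.
by apply/setP=> y; rewrite inE mem_ext !lab_w xpair_eqE eqxx andbT eqQ.
Qed.

Lemma res_ext : res ext = Q.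
Proof.
rewrite /res -{2}(preim_partition_pblock pQ); apply: preim_eq => x y.
by rewrite !lower_ext.
Qed.


Lemma ext_card : #|ext| = #|Q| + delta a b c.
Proof.
pose L : {set {set T} * option bool} := [set ((A : {set T}), None) | A in Q].
have cL : #|L| = #|Q| by apply: card_imset => A B [].
have E : lab @: [set: T'] = lab u |: (lab v |: L).
  apply/setP=> l; apply/imsetP/idP => [[z _ ->]|].
    case: (caseT z) => [->|->|[x ->]]; rewrite !inE ?eqxx ?orbT //.
    by rewrite lab_w; apply/orP; right; apply/orP; right; apply/imsetP; exists (pblock Q x); rewrite ?pbQ.
  rewrite !inE => /or3P[/eqP->|/eqP->|/imsetP[A AQ ->]]; first by exists u.
    by exists v.
  have /imsetP[x _ ->] : A \in [set pblock Q x | x in [set: T]] by rewrite part_pblock_img.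
  by exists (w x); rewrite ?lab_w.
have inL A i : ((A, i) \in L) = (i == None) && (A \in Q).
  apply/imsetP/idP => [[B BQ [-> ->]]|/andP[/eqP-> AQ]]; first by rewrite eqxx.
  by exists A.
rewrite /Board.ext preim_card E !cardsU1 cL !inE lab_u lab_v.
case: a; case: b; case: c; rewrite /= ?inL ?pbQ ?xpair_eqE ?eqxx /= ?orbT //.
all: rewrite /= ?andbF /=; lia.
Qed.

Lemma abc_ext : valid Q a b c -> abcP ext = (a, b, c).
Proof.
rewrite /valid /abcP !mem_ext !lab_w lab_u lab_v.
have E1 : (pblock Q p == pblock Q q) = (q \in pblock Q p) by rewrite eqQ.
have E2 : (pblock Q q == pblock Q p) = (q \in pblock Q p) by rewrite eq_sym eqQ.
have N1 (x : bool) : (Some x == None) = false by [].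
have N2 (x : bool) : (None == Some x) = false by [].
have N3 : (Some true == Some false) = false by [].
case: a; case: b; case: c; rewrite /= ?xpair_eqE ?eqxx ?E1 ?E2 ?N1 ?N2 ?N3 /= ?andbT ?andbF /=;
  case: (q \in pblock Q p) => //.
Qed.


Hypothesis Qpc : forall A, A \in Q -> piece n A.

Definition G (l : {set T} * option bool) : {set T'} := [set y | l == lab y].

Lemma stepG l y z : y \in G l -> z \in G l -> adj n.+1 y z ->
  connect (rest (adj n.+1) (G l)) y z.
Proof. by move=> yG zG ad; apply: connect1; rewrite /rest /= yG zG. Qed.

Lemma L1 x x' : pblock Q x' = pblock Q x ->
  connect (rest (adj n.+1) (G (pblock Q x, None))) (w x') (w x).
Proof.
move=> E; have /andP[_ /forall_inP cA] := Qpc (pbQ x).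
have x'A : x' \in pblock Q x by rewrite -E memQ.
have /forall_inP/(_ x (memQ x)) := cA x' x'A.
apply: connect_img => [a1 a2|a1 Ha1]; first by rewrite adj_ww.
by rewrite inE lab_w (sameQ Ha1) eqxx.
Qed.

Lemma conn_G_None x : conn (adj n.+1) (G (pblock Q x, None)).
Proof.
apply: (@conn_root _ _ _ (w x) (@adj_sym _)); first by rewrite inE lab_w.
move=> y; rewrite inE => /eqP Ey.
have aup : adj n.+1 u (w p) by rewrite adj_sym adj_wu eqxx.
have avq : adj n.+1 v (w q) by rewrite adj_sym adj_wv eqxx.
case: (caseT y) Ey => [->|->|[x' ->]].
- rewrite lab_u; case Ha: a.
    move=> [E].
    have uG : u \in G (pblock Q x, None) by rewrite inE lab_u Ha E.
    have pG : w p \in G (pblock Q x, None) by rewrite inE lab_w E.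
    by apply: connect_trans (stepG uG pG aup) (L1 (esym E)).
  case Hcb: (c && b); last by [].
  move=> [E].
  move/andP: Hcb => [Hc Hb].
  have uG : u \in G (pblock Q x, None) by rewrite inE lab_u Ha Hc Hb E.
  have vG : v \in G (pblock Q x, None) by rewrite inE lab_v Hb E.
  have qG : w q \in G (pblock Q x, None) by rewrite inE lab_w E.
  apply: connect_trans (stepG uG vG adj_uv) _.
  by apply: connect_trans (stepG vG qG avq) (L1 (esym E)).
- rewrite lab_v; case Hb: b.
    move=> [E].
    have vG : v \in G (pblock Q x, None) by rewrite inE lab_v Hb E.
    have qG : w q \in G (pblock Q x, None) by rewrite inE lab_w E.
    by apply: connect_trans (stepG vG qG avq) (L1 (esym E)).
  case Hca: (c && a); last by case: c.
  move=> [E].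
  move/andP: Hca => [Hc Ha].
  have uG : u \in G (pblock Q x, None) by rewrite inE lab_u Ha E.
  have vG : v \in G (pblock Q x, None) by rewrite inE lab_v Hb Hc Ha E.
  have pG : w p \in G (pblock Q x, None) by rewrite inE lab_w E.
  apply: connect_trans (stepG vG uG _) _; first by rewrite adj_sym adj_uv.
  by apply: connect_trans (stepG uG pG aup) (L1 (esym E)).
- by rewrite lab_w => -[E]; apply: L1.
Qed.

Lemma G_true y : y \in G (set0, Some true) ->
  y = u \/ [/\ y = v, c & u \in G (set0, Some true)].
Proof.
rewrite inE => /eqP; case: (caseT y) => [->|->|[x ->]]; first by left.
  rewrite lab_v; case Hb: b => //; case Hca: (c && a) => //; case Hc: c => // _.
  right; split => //; rewrite inE lab_u.
  by move: Hca; rewrite Hc /= => ->; rewrite Hb.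
by rewrite lab_w.
Qed.

Lemma G_false y : y \in G (set0, Some false) -> y = v.
Proof.
rewrite inE => /eqP; case: (caseT y) => [->|->|[x ->]] //.
  by rewrite lab_u; case: a => //; case: (c && b).
by rewrite lab_w.
Qed.

Lemma conn_G_true : conn (adj n.+1) (G (set0, Some true)).
Proof.
apply/forall_inP=> y yG; apply/forall_inP=> y' y'G.
case: (G_true yG) => [E|[E Hc uG]]; case: (G_true y'G) => [E'|[E' _ _]];
  rewrite ?E ?E' ?connect0 //.
- by apply: stepG; [rewrite -E | rewrite -E' | exact: adj_uv].
- by apply: stepG; [rewrite -E | rewrite -E' | rewrite adj_sym adj_uv].
Qed.

Lemma conn_G_false : conn (adj n.+1) (G (set0, Some false)).
Proof.
apply/forall_inP=> y /G_false ->; apply/forall_inP=> y' /G_false ->.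
exact: connect0.
Qed.

Lemma ext_piece A : A \in ext -> piece n.+1 A.
Proof.
case/imsetP=> z _ ->.
have -> : [set y in [set: T'] | lab z == lab y] = G (lab z).
  by apply/setP=> y; rewrite !inE.
rewrite pieceE; apply/andP; split.
  by apply/set0Pn; exists z; rewrite inE.
case: (caseT z) => [->|->|[x ->]]; last by rewrite lab_w; apply: conn_G_None.
  rewrite lab_u; case: a; first by apply: conn_G_None.
  by case: (c && b); [apply: conn_G_None|apply: conn_G_true].
rewrite lab_v; case: b; first by apply: conn_G_None.
case: (c && a); first by apply: conn_G_None.
by case: c; [apply: conn_G_true|apply: conn_G_false].
Qed.

End ExtProps.

Lemma lower_conn (B : {set T'}) : conn (adj n.+1) B -> conn (adj n) (lower B).
Proof.
move=> /forall_inP cB; apply/forall_inP=> x1 x1B; apply/forall_inP=> y1 y1B.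
have := x1B; rewrite inE => wx1B; have := y1B; rewrite inE => wy1B.
have /forall_inP/(_ _ wy1B) := cB _ wx1B.
pose clow r := connect (rest (adj n) (lower B)) x1 r.
pose Gp z := [exists r, [&& r \in lower B, clow r &
   (w r == z) || ((z == u) || (z == v)) && ((r == p) || (r == q))]].
move/(connect_inv (G := Gp)).
have pqadj r1 r2 : (r1 == p) || (r1 == q) -> (r2 == p) || (r2 == q) ->
    (r1 == r2) || adj n r1 r2.
  by case/orP=> /eqP-> /orP[] /eqP->; rewrite ?eqxx ?orbT //= ?adj_pq ?orbT // [adj n q p]adj_sym adj_pq orbT.
move=> Hinv; suff : Gp (w y1).
  move=> /existsP[r /and3P[_ cr]]; rewrite wu wv /= orbF (inj_eq w_inj).
  by move/eqP=> <-.
apply: Hinv.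
- by apply/existsP; exists x1; rewrite x1B /clow connect0 eqxx.
- move=> a' b' /existsP[r /and3P[rB cr H]] /and3P[aB bB ab].
  have clowstep r' : r' \in lower B -> (r == r') || adj n r r' -> clow r'.
    move=> r'B /orP[/eqP <- //|ad]; apply: connect_trans cr (connect1 _).
    by rewrite /rest /= rB r'B.
  case: (caseT a') H ab aB => [->|->|[x ->]] H ab aB.
  + rewrite wu eqxx /= in H.
    case: (caseT b') bB ab => [->|->|[y ->]] bB ab.
    * by apply/existsP; exists r; rewrite rB cr eqxx H /= orbT.
    * by apply/existsP; exists r; rewrite rB cr eqxx H /= !orbT.
    * rewrite adj_sym adj_wu in ab; apply/existsP; exists y.
      have yB : y \in lower B by rewrite inE.
      by rewrite yB clowstep ?eqxx // pqadj // ab.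
  + rewrite wv eqxx /= orbT /= in H.
    case: (caseT b') bB ab => [->|->|[y ->]] bB ab.
    * by apply/existsP; exists r; rewrite rB cr eqxx H /= orbT.
    * by apply/existsP; exists r; rewrite rB cr eqxx H /= !orbT.
    * rewrite adj_sym adj_wv in ab; apply/existsP; exists y.
      have yB : y \in lower B by rewrite inE.
      by rewrite yB clowstep ?eqxx // pqadj // ab orbT.
  + rewrite wu wv /= ?andbF ?orbF (inj_eq w_inj) in H; move/eqP: H => H; subst r.
    case: (caseT b') bB ab => [->|->|[y ->]] bB ab.
    * by apply/existsP; exists x; rewrite rB cr eqxx -adj_wu ab /= orbT.
    * by apply/existsP; exists x; rewrite rB cr eqxx -adj_wv ab /= !orbT.
    * apply/existsP; exists y.
      have yB : y \in lower B by rewrite inE.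
      by rewrite yB clowstep ?eqxx // -adj_ww ab orbT.
Qed.

Section PProps.
Variable P : {set {set T'}}.
Hypothesis pP : partition P [set: T'].
Hypothesis Ppc : forall B, B \in P -> piece n.+1 B.

Lemma memP z : z \in pblock P z.
Proof. by rewrite mem_pblock; apply: part_cover. Qed.
Lemma eqPb z y : (pblock P z == pblock P y) = (y \in pblock P z).
Proof. by rewrite eq_pblock ?(partition_trivIset pP) ?part_cover. Qed.
Lemma samePb y z : y \in pblock P z -> pblock P y = pblock P z.
Proof. by apply: same_pblock; apply: partition_trivIset pP. Qed.
Lemma symPb y z : (y \in pblock P z) = (z \in pblock P y).
Proof. by rewrite -!eqPb eq_sym. Qed.
Lemma connP z : conn (adj n.+1) (pblock P z).
Proof.
have /andP[] // := Ppc (pblock_mem (part_cover z pP)).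
Qed.

Lemma pblock_res x : pblock (res P) x = lower (pblock P (w x)).
Proof.
apply/setP=> y; rewrite preim_pblock [RHS]inE; apply/eqP/idP => [E|H].
  have : y \in lower (pblock P (w x)) by rewrite E inE memP.
  by rewrite inE.
by rewrite (samePb H).
Qed.

Lemma res_part : partition (res P) [set: T].
Proof. exact: preim_partitionP. Qed.

Lemma res_piece A : A \in res P -> piece n A.
Proof.
rewrite -(part_pblock_img res_part) => /imsetP[x _ ->].
rewrite pieceE pblock_res; apply/andP; split.
  by apply/set0Pn; exists x; rewrite inE memP.
exact/lower_conn/connP.
Qed.

Lemma closure_u : w p \notin pblock P u -> v \notin pblock P u -> pblock P u \subset [set u].
Proof.
move=> Hp Hv; have H := (@closureS _ (adj n.+1) (pblock P u) [set u] u (connP u) (memP u)); apply: H; first by rewrite inE.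
move=> a' b' /set1P -> _ bB ab.
case: (caseT b') bB ab => [->|->|[y ->]] bB ab; first by rewrite inE.
  by rewrite bB in Hv.
rewrite adj_sym adj_wu in ab; move/eqP: ab => ab; subst y.
by rewrite bB in Hp.
Qed.

Lemma closure_v : w q \notin pblock P v -> u \notin pblock P v -> pblock P v \subset [set v].
Proof.
move=> Hq Hu; have H := (@closureS _ (adj n.+1) (pblock P v) [set v] v (connP v) (memP v)); apply: H; first by rewrite inE.
move=> a' b' /set1P -> _ bB ab.
case: (caseT b') bB ab => [->|->|[y ->]] bB ab; last 1 first.
- rewrite adj_sym adj_wv in ab; move/eqP: ab => ab; subst y.
  by rewrite bB in Hq.
- by rewrite bB in Hu.
- by rewrite inE.
Qed.

Lemma closure_uv : w p \notin pblock P u -> w q \notin pblock P u ->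
  pblock P u \subset [set u; v].
Proof.
move=> Hp Hq; have H := (@closureS _ (adj n.+1) (pblock P u) [set u; v] u (connP u) (memP u)); apply: H; first by rewrite !inE eqxx.
move=> a' b' /set2P[->|->] _ bB ab;
  (case: (caseT b') bB ab => [->|->|[y ->]] bB ab; first by rewrite !inE eqxx);
  try by rewrite !inE eqxx orbT.
- rewrite adj_sym adj_wu in ab; move/eqP: ab => ab; subst y.
  by rewrite bB in Hp.
- rewrite adj_sym adj_wv in ab; move/eqP: ab => ab; subst y.
  by rewrite bB in Hq.
Qed.

Lemma lower_empty (B : {set T'}) : B \subset [set u; v] -> lower B = set0.
Proof.
move=> /subsetP sB; apply/setP=> x; rewrite !inE; apply/negP => /sB.
by rewrite !inE wu wv.
Qed.


Definition aP := w p \in pblock P u.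
Definition cP := v \in pblock P u.
Definition bP := (w q \in pblock P v) && ~~ (aP && cP).

Lemma abcPE : abcP P = (aP, bP, cP).
Proof. by []. Qed.

Definition Lf (B : {set T'}) : {set T} * option bool :=
  if lower B != set0 then (lower B, None)
  else if u \in B then (set0, Some true) else (set0, Some false).

Lemma Lf_w x : Lf (pblock P (w x)) = (lower (pblock P (w x)), None).
Proof.
rewrite /Lf; have -> // : lower (pblock P (w x)) != set0.
by apply/set0Pn; exists x; rewrite inE memP.
Qed.

Lemma is_v z : lower (pblock P z) = set0 -> u \notin pblock P z -> z = v.
Proof.
move=> E Hu; case: (caseT z) E Hu => [->|->|[x ->]] //; first by rewrite memP.
move=> E _; have : x \in lower (pblock P (w x)) by rewrite inE memP.
by rewrite E inE.
Qed.

Lemma Lf_inj z y : Lf (pblock P z) = Lf (pblock P y) -> pblock P z = pblock P y.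
Proof.
rewrite /Lf; have [Hz|Hz] := boolP (lower (pblock P z) != set0);
  have [Hy|Hy] := boolP (lower (pblock P y) != set0).
- move=> [E]; case/set0Pn: Hz => x; rewrite inE => xz.
  have : x \in lower (pblock P y) by rewrite -E inE.
  rewrite inE => xy.
  by rewrite -(samePb xz) -(samePb xy).
- by case: ifP.
- by case: ifP.
- move/negbNE/eqP: Hz => Hz; move/negbNE/eqP: Hy => Hy.
  case: ifP => uz; case: ifP => uy // _.
    by rewrite -(samePb uz) -(samePb uy).
  by rewrite (is_v Hz (negbT uz)) (is_v Hy (negbT uy)).
Qed.

Lemma lab_Lf z : lab (res P) aP bP cP z = Lf (pblock P z).
Proof.
case: (caseT z) => [->|->|[x ->]]; last by rewrite lab_w Lf_w pblock_res.
- rewrite lab_u; case Ha: aP.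
    by rewrite -(samePb Ha) Lf_w pblock_res.
  case Hcb: (cP && bP).
    move/andP: Hcb => [Hc /andP[Hq _]].
    by rewrite -(samePb Hc) -(samePb Hq) Lf_w pblock_res.
  have sub : pblock P u \subset [set u; v].
    case Hc: cP.
      apply: closure_uv; first by rewrite -/aP Ha.
      have Hb : bP = false by move: Hcb; rewrite Hc.
      move: Hb; rewrite /bP -/aP Ha /= andbT => Hq.
      by rewrite -(samePb Hc) Hq.
    apply: subset_trans (closure_u _ _) _; first by rewrite -/aP Ha.
      by rewrite -/cP Hc.
    by rewrite sub1set !inE eqxx.
  by rewrite /Lf lower_empty // eqxx /= memP.
- rewrite lab_v; case Hb: bP.
    move/andP: Hb => [Hq _].
    by rewrite -(samePb Hq) Lf_w pblock_res.
  case Hca: (cP && aP).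
    move/andP: Hca => [Hc Ha].
    by rewrite (samePb Hc) -(samePb Ha) Lf_w pblock_res.
  case Hc: cP.
    have Ha : aP = false by move: Hca; rewrite Hc.
    have Hq : w q \notin pblock P v.
      by move: Hb; rewrite /bP Ha Hc /= andbT => ->.
    rewrite (samePb Hc) /Lf lower_empty ?eqxx ?memP //.
    apply: closure_uv; first by rewrite -/aP Ha.
    by rewrite -(samePb Hc).
  have Hq : w q \notin pblock P v.
    by move: Hb; rewrite /bP Hc andbF /= andbT => ->.
  have Hu : u \notin pblock P v by rewrite symPb -/cP Hc.
  have sub : pblock P v \subset [set u; v].
    apply: subset_trans (closure_v Hq Hu) _.
    by rewrite sub1set !inE eqxx orbT.
  by rewrite /Lf lower_empty ?eqxx //= (negbTE Hu).
Qed.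

Lemma P_ext : P = ext (res P) aP bP cP.
Proof.
rewrite /ext -{1}(preim_partition_pblock pP); apply: preim_eq => z y.
by rewrite !lab_Lf; apply/eqP/eqP => [->|/Lf_inj].
Qed.

Lemma valid_res : valid (res P) aP bP cP.
Proof.
rewrite /valid pblock_res inE; apply/andP; split.
  by rewrite /bP; case: aP; case: cP; rewrite ?andbF.
apply/implyP => Hpq; apply/negP => /orP[/and3P[Ha Hb Hc]|/and3P[Ha Hb Hc]].
- move/andP: Hb => [Hq _].
  have : pblock P u == pblock P v.
    by rewrite -(samePb Ha) -(samePb Hpq) (samePb Hq).
  by rewrite eqPb -/cP (negbTE Hc).
- move/andP: Hb => [Hq _].
  have : pblock P u == pblock P (w p).
    by rewrite -(samePb Hc) -(samePb Hq) (samePb Hpq).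
  by rewrite eqPb -/aP (negbTE Ha).
Qed.

End PProps.

Lemma divisionP m k (P : {set {set square m}}) :
  division m k P = [&& partition P [set: square m], [forall A in P, piece m A] & #|P| == k].
Proof. by []. Qed.

Lemma cell k a b c : 2 <= k ->
  #|[set P in [set P | division n.+1 k P] | abcP P == (a, b, c)]| =
  #|[set Q | division n (k - delta a b c) Q & valid Q a b c]|.
Proof.
move=> k2; have dle : delta a b c <= k by case: a; case: b; case: c => /=; lia.
apply: (card_bij (f := res) (g := fun Q => ext Q a b c)).
- move=> P; rewrite !inE divisionP => /andP[/and3P[pP /forall_inP Ppc /eqP cardP] /eqP abc].
  have Ppc' : forall B, B \in P -> piece n.+1 B by [].
  move: abc; rewrite abcPE => -[Ea Eb Ec].
  have Pe := P_ext pP Ppc'; rewrite Ea Eb Ec in Pe.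
  split; last by rewrite -Pe.
  have Hv := valid_res pP; rewrite Ea Eb Ec in Hv.
  rewrite divisionP Hv (res_part P) andbT /=.
  apply/andP; split; first by apply/forall_inP => A; apply: res_piece.
  have := ext_card (res_part P) a b c; rewrite -Pe cardP => ->.
  by rewrite addnK.
- move=> Q; rewrite inE divisionP => /andP[/and3P[pQ /forall_inP Qpc /eqP cQ] Hv].
  split; last exact: res_ext.
  rewrite !inE divisionP (ext_part Q a b c) abc_ext // eqxx andbT /=.
  apply/andP; split; first by apply/forall_inP => A; apply: ext_piece.
  by rewrite ext_card // cQ subnK.
Qed.

Lemma rsplitE (Q : {set {set T}}) : partition Q [set: T] ->
  rightmost_split n Q = (q \notin pblock Q p).
Proof.
move=> pQ; apply/idP/idP.
- move/forall_inP/(_ _ (pbQ pQ p))/forallP/(_ p)/forallP/(_ q).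
  by rewrite /= !eqxx /= (memQ pQ p).
- move=> Hq; apply/forall_inP => A AQ; apply/forallP => x; apply/forallP => y.
  apply/implyP => /andP[/eqP Hx /eqP Hy].
  have -> : x = p by apply: val_inj.
  have -> : y = q by apply: val_inj.
  apply/negP => /andP[pA qA].
  by rewrite (def_pblock (partition_trivIset pQ) AQ pA) qA in Hq.
Qed.

Lemma main k : 2 <= k ->
  d k n.+1 = (d (k - 2) n + 3 * d (k - 1) n + d k n + 2 * s k n)%N.
Proof.
move=> k2; rewrite /d (card_split3 _ abcP) /=.
rewrite !big_bool /= !cell //= /valid /=.
have E j : [set Q | division n j Q & true] = [set Q | division n j Q].
  by apply/setP=> Q; rewrite !inE andbT.
have F : [set Q | division n k Q & false] = set0.
  by apply/setP=> Q; rewrite !inE andbF.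
have S : [set Q | division n k Q & (q \in pblock Q p) ==> false] =
         [set P | division n k P && rightmost_split n P].
  apply/setP=> Q; rewrite !inE implybF.
  case dQ: (division n k Q) => //=.
  by rewrite rsplitE //; move: dQ; rewrite divisionP => /and3P[].
have E2 j : [set Q | division n j Q & (q \in pblock Q p) ==> true] = [set Q | division n j Q].
  by apply/setP=> Q; rewrite !inE implybT andbT.
rewrite !E2 ?E !subn0 F cards0 S.
rewrite /d /s.
move: #|[set P | division n k P & rightmost_split n P]| #|[set Q | division n k Q]| #|[set Q | division n (k - 1) Q]| #|[set Q | division n (k - 2) Q]| => x1 x2 x3 x4.
lia.
Qed.

End Board.

Unset Implicit Arguments.
Theorem theorem1 (n k : nat) :
  1 <= n -> 2 <= k ->
  d k n.+1 = (d (k - 2) n + 3 * d (k - 1) n + d k n + 2 * s k n)%N.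
Proof. by move=> n1 k2; apply: main. Qed.
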